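(* Let $G$ be a $k$-terminal directed acyclic graph with unit edge lengths and let $P\subseteq K\times K$ be a set of terminal pairs $(s,t)$ such that $t$ is reachable from $s$ in $G$. Let $\pi$ be a consistent shortest-path tie-breaking scheme in $G$, and let $H$ be the subgraph of $G$ formed by the union of the directed paths $\pi(s,t)$ over all $(s,t)\in P$. Then $H$ has at most $|P|(|P|-1)/2$ branching events.
   Context: A shortest-path tie-breaking scheme is a function $\pi$ mapping every ordered pair of vertices $(s,t)$ with $t$ reachable from $s$ to a fixed shortest directed path from $s$ to $t$ (lengths measured in number of edges); $d(\cdot,\cdot)$ denotes the directed shortest-path distance. It is consistent if for all vertices $y,x,x',y'$: whenever $x,x'$ lie on $\pi(y,y')$ with $d(y,x)<d(y,x')$, the path $\pi(x,x')$ is a subpath of $\pi(y,y')$. A branching event in a digraph is a set $\{(u_1,v),(u_2,v)\}$ of two distinct directed edges entering the same vertex $v$. *)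

(* Defs.v *)
From mathcomp Require Import all_boot.
Set Implicit Arguments. Unset Strict Implicit. Unset Printing Implicit Defensive.

Section Graph.
Variables (V : finType) (e : rel V).

(* A directed walk from s is represented by the list of its vertices after s;
   [path e s p] and [last s p = t] say it goes from s to t, [size p] = number of edges. *)

Definition walkn (s t : V) (n : nat) : bool :=
  [exists p : n.-tuple V, path e s p && (last s p == t)].

Lemma connect_walkn (s t : V) : connect e s t -> exists n, walkn s t n.
Proof.
move=> /connectP [p Hp Hl]; exists (size p); apply/existsP.
exists (in_tuple p); by rewrite /= Hp Hl eqxx.
Qed.

(* directed shortest-path distance (unit edge lengths); 0 if unreachable *)
Definition dist (s t : V) : nat :=
  match @idP (connect e s t) with
  | ReflectT h => ex_minn (connect_walkn h)
  | ReflectF _ => 0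
  end.

Definition dag : Prop := forall x p, path e x p -> last x p = x -> p = [::].

Definition tie_breaking (pi : V -> V -> seq V) : Prop :=
  forall s t, connect e s t ->
    [/\ path e s (pi s t), last s (pi s t) = t & size (pi s t) = dist s t].

Definition consistent (pi : V -> V -> seq V) : Prop :=
  forall y y' x x', connect e y y' ->
    x \in y :: pi y y' -> x' \in y :: pi y y' -> dist y x < dist y x' ->
    infix (x :: pi x x') (y :: pi y y').

Definition walk_edges (s : V) (p : seq V) : seq (V * V) := zip (s :: p) p.

Definition union_graph (pi : V -> V -> seq V) (P : {set V * V}) : {set V * V} :=
  [set uv | [exists st in P, uv \in walk_edges st.1 (pi st.1 st.2)]].

Definition branching_events (H : {set V * V}) : {set {set V * V}} :=
  [set B : {set V * V} | [&& B \subset H, #|B| == 2 &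
       [forall a in B, forall b in B, a.2 == b.2]]].

End Graph.

(* Main.v *)
Require Import Defs.
From mathcomp Require Import all_boot zify.
Set Implicit Arguments. Unset Strict Implicit. Unset Printing Implicit Defensive.

Section SeqAux.
Variable T : eqType.

Lemma zip_infix (x : T) l (p : T * T) :
  p \in zip (x :: l) l -> infix [:: p.1; p.2] (x :: l).
Proof.
elim: l x => [|y l IH] x; first by rewrite in_nil.
rewrite [zip _ _]/= in_cons => /orP [/eqP ->|/IH H].
  by rewrite /= !eqxx prefix0s.
by rewrite infix_consl H orbT.
Qed.

Lemma infix2_mem (u w : T) l : infix [:: u; w] l -> w \in l.
Proof. by case/infixP=> a [b ->]; rewrite mem_cat !inE eqxx !orbT. Qed.

Lemma infix2_pred (u w : T) l : uniq l -> infix [:: u; w] l ->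
  u = nth w l (index w l).-1.
Proof.
move=> Ul /infixP [a [b El]]; subst l.
move: Ul; rewrite cat_uniq => /and3P [_ Hh U2].
have wa : w \notin a.
  apply/negP=> wa; move/negP: Hh; apply; apply/hasP; exists w => //.
  by rewrite !inE eqxx orbT.
have uw : u != w by move: U2 => /= /andP [] ; rewrite !inE negb_or => /andP [].
rewrite index_cat (negbTE wa) /= (negbTE uw) eqxx addn1 /=.
by rewrite nth_cat ltnn subnn.
Qed.

Lemma infix2_uniq (u u' w : T) l : uniq l -> infix [:: u; w] l ->
  infix [:: u'; w] l -> u = u'.
Proof. by move=> U H1 H2; rewrite (infix2_pred U H1) (infix2_pred U H2). Qed.

Lemma last_edge (v : T) r : r != [::] -> exists u, infix [:: u; last v r] (v :: r).
Proof.
case/lastP: r => [//|r w] _; exists (last v r).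
rewrite last_rcons -rcons_cons (lastI v r) -!cats1 -catA.
exact: suffix_infix.
Qed.

Lemma index_inj (x y : T) l : x \in l -> y \in l -> index x l = index y l -> x = y.
Proof. by move=> xl yl E; rewrite -(nth_index x xl) E nth_index. Qed.

End SeqAux.

Section Dist.
Variables (V : finType) (e : rel V).

Lemma dist_walk s t : connect e s t -> walkn e s t (dist e s t).
Proof. by rewrite /dist => c; destruct (@idP (connect e s t)) => //; case: ex_minnP. Qed.

Lemma dist_min s t n : walkn e s t n -> dist e s t <= n.
Proof.
move=> W; rewrite /dist; destruct (@idP (connect e s t)) => //.
by case: ex_minnP => m _ ->.
Qed.

Lemma walkn_path s q : path e s q -> walkn e s (last s q) (size q).
Proof. by move=> pq; apply/existsP; exists (in_tuple q); rewrite /= pq eqxx. Qed.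

Lemma walkn_ex s t n : walkn e s t n ->
  exists q, [/\ path e s q, last s q = t & size q = n].
Proof.
by case/existsP=> q /andP [pq /eqP lq]; exists q; rewrite size_tuple.
Qed.

Variable pi : V -> V -> seq V.
Hypothesis tie : tie_breaking e pi.

Lemma distA s t i : connect e s t -> i <= size (pi s t) ->
  dist e s (nth s (s :: pi s t) i) = i.
Proof.
move=> c hi; have [pp lp sp] := tie c.
set p := pi s t in pp lp sp hi *.
have Ex : nth s (s :: p) i = last s (take i p).
  rewrite (last_nth s) size_takel //.
  rewrite -[in LHS](cat_take_drop i p) -cat_cons nth_cat /= size_takel //.
  by rewrite ltnS leqnn.
have := pp; rewrite -[p in path _ _ p](cat_take_drop i p) cat_path => /andP [p1 p2].
apply/eqP; rewrite eqn_leq; apply/andP; split.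
  by rewrite Ex -{2}(size_takel hi); apply/dist_min/walkn_path.
rewrite Ex; set x := last s (take i p) in p2 *.
have cx : connect e s x by apply/connectP; exists (take i p).
have [q [pq lq sq]] := walkn_ex (dist_walk cx).
have : walkn e s t (size (q ++ drop i p)).
  have -> : t = last s (q ++ drop i p).
    by rewrite last_cat lq /x -last_cat cat_take_drop.
  by apply: walkn_path; rewrite cat_path pq lq.
move/dist_min; rewrite -sp size_cat sq size_drop; lia.
Qed.

Lemma distI s t x : connect e s t -> x \in s :: pi s t ->
  dist e s x = index x (s :: pi s t).
Proof.
move=> c xin; rewrite -{1}(nth_index s xin) distA //.
by rewrite -ltnS; move: xin; rewrite -index_mem.
Qed.

Lemma pi_uniq s t : connect e s t -> uniq (s :: pi s t).
Proof.
move=> c; apply/(uniqP s) => i j hi hj E.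
move: hi hj; rewrite !inE /= !ltnS => hi hj.
by rewrite -(distA c hi) E distA.
Qed.

End Dist.

Section Main.
Variables (V : finType) (e : rel V) (pi : V -> V -> seq V).
Hypotheses (tie : tie_breaking e pi) (cons : consistent e pi) (dagH : dag e).

Local Notation L q := (q.1 :: pi q.1 q.2).

Lemma conn_pos s p x y : path e s p -> x \in s :: p -> y \in s :: p ->
  index x (s :: p) <= index y (s :: p) -> connect e x y.
Proof.
move=> pp xin yin le.
have so : sorted (connect e) (s :: p).
  by apply: (sub_path _ pp) => a b; apply: connect1.
have := sorted_leq_nth (@connect_trans _ e) (@connect0 _ e) s so.
move=> /(_ (index x (s :: p)) (index y (s :: p))).
rewrite !nth_index //; apply; rewrite ?inE ?index_mem //.
Qed.

Lemma pi_ne v w : connect e v w -> v != w -> pi v w != [::].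
Proof.
move=> c vw; have [_ l _] := tie c; apply/negP => /eqP E.
by move: l vw; rewrite E /= => ->; rewrite eqxx.
Qed.

Lemma order_pres q q' v w : connect e q.1 q.2 -> connect e q'.1 q'.2 ->
  v != w -> v \in L q -> w \in L q -> v \in L q' -> w \in L q' ->
  index v (L q) < index w (L q) -> index v (L q') < index w (L q').
Proof.
move=> c c' vw vq wq vq' wq' lt.
have [pp _ _] := tie c; have [pp' _ _] := tie c'.
have cvw := conn_pos pp vq wq (ltnW lt).
rewrite ltnNge; apply/negP => le.
have cwv := conn_pos pp' wq' vq' le.
have [p1 l1 _] := tie cvw; have [p2 l2 _] := tie cwv.
have : pi v w ++ pi w v = [::].
  by apply: (dagH (x:=v)); rewrite ?cat_path ?last_cat l1 ?p1 ?p2.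
by case: (pi v w) (pi_ne cvw vw).
Qed.

Lemma half q q' v w u u' : connect e q.1 q.2 -> connect e q'.1 q'.2 ->
  v != w -> v \in L q -> w \in L q -> v \in L q' -> w \in L q' ->
  index v (L q) < index w (L q) -> index v (L q') < index w (L q') ->
  infix [:: u; w] (L q) -> infix [:: u'; w] (L q') -> u = u'.
Proof.
move=> c c' vw vq wq vq' wq' lt lt' Hu Hu'.
have [pp _ _] := tie c.
have cvw := conn_pos pp vq wq (ltnW lt).
have [_ lvw _] := tie cvw.
have [u0 H0] := last_edge v (pi_ne cvw vw); rewrite lvw in H0.
have I1 : infix (v :: pi v w) (L q).
  by apply: cons => //; rewrite !(distI tie c).
have I2 : infix (v :: pi v w) (L q').
  by apply: cons => //; rewrite !(distI tie c').
rewrite (infix2_uniq (pi_uniq tie c) Hu (infix_trans H0 I1)).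
by rewrite (infix2_uniq (pi_uniq tie c') Hu' (infix_trans H0 I2)).
Qed.

End Main.

Lemma pair_eq (T1 T2 : Type) (a b : T1 * T2) : a.1 = b.1 -> a.2 = b.2 -> a = b.
Proof. by case: a; case: b => /= ? ? ? ? -> ->. Qed.

Section Count.
Variables (V : finType) (e : rel V) (pi : V -> V -> seq V).
Hypotheses (tie : tie_breaking e pi) (cons : consistent e pi) (dagH : dag e).
Variable P : {set V * V}.
Hypothesis conP : forall st, st \in P -> connect e st.1 st.2.

Local Notation L q := (q.1 :: pi q.1 q.2).
Local Notation H := (union_graph pi P).

Definition g (a : V * V) : V * V :=
  odflt a [pick st in P | a \in walk_edges st.1 (pi st.1 st.2)].

Lemma gP a : a \in H -> g a \in P /\ infix [:: a.1; a.2] (L (g a)).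
Proof.
rewrite inE => /existsP [st /andP [stP ast]]; rewrite /g.
case: pickP => [q /andP [qP aq]|/(_ st)]; last by rewrite stP ast.
by split => //; apply: zip_infix.
Qed.

Lemma gne a b : a \in H -> b \in H -> a.2 = b.2 -> a != b -> g a != g b.
Proof.
move=> aH bH h ab; apply/negP => /eqP E.
have [gaP Ha] := gP aH; have [_ Hb] := gP bH.
rewrite -E -h in Hb.
move/negP: ab; apply; apply/eqP/pair_eq => //.
exact: (infix2_uniq (pi_uniq tie (conP gaP)) Ha Hb).
Qed.

Lemma core a b a' b' : a \in H -> b \in H -> a' \in H -> b' \in H ->
  a.2 = b.2 -> a'.2 = b'.2 -> g a != g b -> g a = g a' -> g b = g b' ->
  a' != b' -> a = a' /\ b = b'.
Proof.
move=> aH bH aH' bH' hab hab' gab E1 E2 ab'.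
have [q1P Ha] := gP aH; have [q2P Hb] := gP bH.
have [_ Ha'] := gP aH'; have [_ Hb'] := gP bH'.
rewrite -E1 in Ha'; rewrite -E2 in Hb'.
have c1 := conP q1P; have c2 := conP q2P.
rewrite -hab in Hb; rewrite -hab' in Hb'.
set v := a.2 in Ha Hb *; set w := a'.2 in Ha' Hb' *.
have vq1 := infix2_mem Ha; have vq2 := infix2_mem Hb.
have wq1 := infix2_mem Ha'; have wq2 := infix2_mem Hb'.
case: (eqVneq v w) => [Evw|vw].
  rewrite -Evw in Ha' Hb'.
  split; apply: pair_eq.
  - exact: (infix2_uniq (pi_uniq tie c1) Ha Ha').
  - exact: Evw.
  - exact: (infix2_uniq (pi_uniq tie c2) Hb Hb').
  - by rewrite -hab -hab'.
case: (ltngtP (index v (L (g a))) (index w (L (g a)))) => [lt|gt|eqi].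
- have lt2 := order_pres tie dagH c1 c2 vw vq1 wq1 vq2 wq2 lt.
  have := half tie cons c1 c2 vw vq1 wq1 vq2 wq2 lt lt2 Ha' Hb'.
  by move=> h; move/negP: ab'; case; apply/eqP/pair_eq.
- have wv : w != v by rewrite eq_sym.
  have gt2 := order_pres tie dagH c1 c2 wv wq1 vq1 wq2 vq2 gt.
  have := half tie cons c1 c2 wv wq1 vq1 wq2 vq2 gt gt2 Ha Hb.
  move=> h; have abE : a = b by apply/pair_eq.
  by move/negP: gab; case; rewrite abE.
- by move: vw; rewrite (index_inj vq1 wq1 eqi) eqxx.
Qed.

Lemma dest B : B \in branching_events H ->
  exists a b, [/\ a != b, B = [set a; b], a \in H, b \in H & a.2 = b.2].
Proof.
rewrite inE => /and3P [sub c2 hd].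
case/cards2P: c2 => a [b [ab EB]]; exists a, b; split => //.
- by apply: (subsetP sub); rewrite EB set21.
- by apply: (subsetP sub); rewrite EB set22.
have := forallP hd a; rewrite EB set21 /= => /forallP /(_ b).
by rewrite set22 /= => /eqP.
Qed.

Lemma imset2 (f : V * V -> V * V) a b : f @: [set a; b] = [set f a; f b].
Proof. by rewrite imsetU1 imset_set1. Qed.

Lemma count_main : #|branching_events H| <= #|P| * (#|P| - 1) %/ 2.
Proof.
set BE := branching_events H.
have inj : {in BE &, injective (fun B : {set V * V} => g @: B)}.
  move=> B B' /dest [a [b [ab -> aH bH hab]]] /dest [a' [b' [ab' -> aH' bH' hab']]].
  rewrite !imset2 => E.
  have gab := gne aH bH hab ab.
  have : g a \in [set g a'; g b'] by rewrite -E set21.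
  have : g b \in [set g a'; g b'] by rewrite -E set22.
  move=> /set2P hb /set2P ha.
  case: ha => ha.
    case: hb => hb; first by move: gab; rewrite ha hb eqxx.
    by have [-> ->] := core aH bH aH' bH' hab hab' gab ha hb ab'.
  case: hb => hb; last by move: gab; rewrite ha hb eqxx.
  have ba' : b' != a' by rewrite eq_sym.
  have [-> ->] := core aH bH bH' aH' hab (esym hab') gab ha hb ba'.
  by rewrite setUC.
rewrite -(card_in_imset inj).
apply: (leq_trans (subset_leq_card (B := [set Q : {set V * V} | Q \subset P & #|Q| == 2]) _)).
  apply/subsetP => Q /imsetP [B /dest [a [b [ab -> aH bH hab]]] ->].
  rewrite inE imset2 cards2 gne // andbT.
  have [gaP _] := gP aH; have [gbP _] := gP bH.
  by apply/subsetP => x /set2P [] ->.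
by rewrite cards_draws bin2 divn2 subn1.
Qed.

End Count.

Theorem mainTheorem5 (V : finType) (e : rel V) (k : nat) (K : {set V})
  (P : {set V * V}) (pi : V -> V -> seq V) :
  dag e -> #|K| = k ->
  P \subset setX K K ->
  (forall st, st \in P -> connect e st.1 st.2) ->
  tie_breaking e pi -> consistent e pi ->
  #|branching_events (union_graph pi P)| <= #|P| * (#|P| - 1) %/ 2.
Proof.
move=> dagH _ _ conP tie cons.
exact: (count_main tie cons dagH conP).
Qed.
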